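(* For $\mathbf{x}=(x_0,x_1),\ \mathbf{y}=(y_0,y_1)\in\mathbb{R}^2$ let $\langle\mathbf{x},\mathbf{y}\rangle:=x_0y_0-x_1y_1$ and $$k(\mathbf{x},\mathbf{y})=\frac{\langle\mathbf{x},\mathbf{x}\rangle-\langle\mathbf{y},\mathbf{y}\rangle}{\langle\mathbf{x}+\mathbf{y},\mathbf{x}+\mathbf{y}\rangle}.$$ Define the momentum-energy map $$\mathbf{R}:(\mathbf{x},\mathbf{y})\mapsto(\mathbf{u},\mathbf{v}):=\big(\mathbf{y}+k(\mathbf{x},\mathbf{y})(\mathbf{x}+\mathbf{y}),\ \mathbf{x}-k(\mathbf{x},\mathbf{y})(\mathbf{x}+\mathbf{y})\big)$$ (defined where $\langle\mathbf{x}+\mathbf{y},\mathbf{x}+\mathbf{y}\rangle\neq 0$). Then $\mathbf{R}$ is a (non-parametric) quadrirational Yang--Baxter map, and it has Lax matrix $$\mathbf{L}(\mathbf{x},\zeta)=\begin{pmatrix}\zeta & x_0+x_1\\ x_0-x_1 & \zeta\end{pmatrix},$$ i.e. $\mathbf{L}(\mathbf{u},\zeta)\mathbf{L}(\mathbf{v},\zeta)=\mathbf{L}(\mathbf{y},\zeta)\mathbf{L}(\mathbf{x},\zeta)$ for all $\zeta\in\mathbb{C}$ whenever $(\mathbf{u},\mathbf{v})=\mathbf{R}(\mathbf{x},\mathbf{y})$.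
   Context: A map $R:\mathcal{X}\times\mathcal{X}\to\mathcal{X}\times\mathcal{X}$, $R(x,y)=(u(x,y),v(x,y))$, is a Yang--Baxter map if $R_{23}\circ R_{13}\circ R_{12}=R_{12}\circ R_{13}\circ R_{23}$ on $\mathcal{X}^3$, where $R_{12}(x,y,z)=(u(x,y),v(x,y),z)$, $R_{13}(x,y,z)=(u(x,z),y,v(x,z))$, $R_{23}(x,y,z)=(x,u(y,z),v(y,z))$. It is quadrirational if, for fixed $y$ and fixed $x$ respectively, the maps $u(\cdot,y)$ and $v(x,\cdot)$ are birational isomorphisms of $\mathcal{X}$ to itself. A matrix $L(x,\zeta)$ depending on $x\in\mathcal{X}$ and a spectral parameter $\zeta\in\mathbb{C}$ is a Lax matrix of $R$ if $L(u,\zeta)L(v,\zeta)=L(y,\zeta)L(x,\zeta)$ whenever $(u,v)=R(x,y)$. Here $\mathcal{X}=\mathbb{R}^2$ (maps understood generically, where defined). *)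

(* Defs.v *)
From Stdlib Require Import Reals List.
From Coquelicot Require Import Complex.
Open Scope R_scope.

Definition pt := (R * R)%type.

Definition padd (x y : pt) : pt := (fst x + fst y, snd x + snd y).
Definition psub (x y : pt) : pt := (fst x - fst y, snd x - snd y).
Definition pscal (c : R) (x : pt) : pt := (c * fst x, c * snd x).

Definition mink (x y : pt) : R := fst x * fst y - snd x * snd y.

(** k(x,y) = (<x,x> - <y,y>) / <x+y,x+y>  (Rdiv is total; only used where
    the denominator is nonzero). *)
Definition kfun (x y : pt) : R :=
  (mink x x - mink y y) / mink (padd x y) (padd x y).

Definition Rdom (x y : pt) : Prop := mink (padd x y) (padd x y) <> 0.

Definition u_map (x y : pt) : pt := padd y (pscal (kfun x y) (padd x y)).
Definition v_map (x y : pt) : pt := psub x (pscal (kfun x y) (padd x y)).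
Definition Rmap (x y : pt) : pt * pt := (u_map x y, v_map x y).

Definition Ropt (x y : pt) : option (pt * pt) :=
  if Req_EM_T (mink (padd x y) (padd x y)) 0 then None else Some (Rmap x y).

Definition triple := (pt * pt * pt)%type.

Definition R12 (t : triple) : option triple :=
  match t with (x, y, z) =>
    match Ropt x y with Some (u, v) => Some (u, v, z) | None => None end end.
Definition R13 (t : triple) : option triple :=
  match t with (x, y, z) =>
    match Ropt x z with Some (u, v) => Some (u, y, v) | None => None end end.
Definition R23 (t : triple) : option triple :=
  match t with (x, y, z) =>
    match Ropt y z with Some (u, v) => Some (x, u, v) | None => None end end.

Definition obind {A B : Type} (f : A -> option B) (o : option A) : option B :=
  match o with Some a => f a | None => None end.

(** Yang--Baxter equation R23 o R13 o R12 = R12 o R13 o R23, holding at every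
    point of X^3 where both composites are defined. *)
Definition YB_generic : Prop :=
  forall (t a b : triple),
    obind R23 (obind R13 (R12 t)) = Some a ->
    obind R12 (obind R13 (R23 t)) = Some b ->
    a = b.

(** Real polynomials in two variables, as finite lists of monomials
    (coefficient, exponent of x0, exponent of x1). *)
Definition poly2 := list (R * nat * nat).

Definition peval (p : poly2) (x : pt) : R :=
  fold_right (fun m acc => match m with (c, i, j) =>
                c * (fst x) ^ i * (snd x) ^ j + acc end) 0 p.

(** A polynomial is nonzero as a function (equivalently, as a polynomial over R). *)
Definition nonzero_poly (h : poly2) : Prop := exists x : pt, peval h x <> 0.

Record ratmap := RatMap { num0 : poly2; den0 : poly2; num1 : poly2; den1 : poly2 }.

Definition rdefined (F : ratmap) (x : pt) : Prop :=
  peval (den0 F) x <> 0 /\ peval (den1 F) x <> 0.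

Definition reval (F : ratmap) (x : pt) : pt :=
  (peval (num0 F) x / peval (den0 F) x, peval (num1 F) x / peval (den1 F) x).

(** f : X -> X is a birational isomorphism of X = R^2 to itself: it coincides,
    on a Zariski-dense open set, with a rational map F admitting a rational
    inverse G (G o F = id and F o G = id generically). *)
Definition birational (f : pt -> pt) : Prop :=
  exists (F G : ratmap) (h1 h2 : poly2),
    nonzero_poly h1 /\ nonzero_poly h2 /\
    (forall x, peval h1 x <> 0 ->
       rdefined F x /\ reval F x = f x /\
       rdefined G (reval F x) /\ reval G (reval F x) = x) /\
    (forall w, peval h2 w <> 0 ->
       rdefined G w /\ rdefined F (reval G w) /\ reval F (reval G w) = w).

Definition quadrirational (u v : pt -> pt -> pt) : Prop :=
  (forall y, birational (fun x => u x y)) /\ (forall x, birational (fun y => v x y)).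

Record mat2 := Mat2 { m11 : C; m12 : C; m21 : C; m22 : C }.

Definition mmul (A B : mat2) : mat2 :=
  Mat2 (Cplus (Cmult (m11 A) (m11 B)) (Cmult (m12 A) (m21 B)))
       (Cplus (Cmult (m11 A) (m12 B)) (Cmult (m12 A) (m22 B)))
       (Cplus (Cmult (m21 A) (m11 B)) (Cmult (m22 A) (m21 B)))
       (Cplus (Cmult (m21 A) (m12 B)) (Cmult (m22 A) (m22 B))).

Definition Lax (x : pt) (zeta : C) : mat2 :=
  Mat2 zeta (RtoC (fst x + snd x)) (RtoC (fst x - snd x)) zeta.

(* Main.v *)
Require Import Defs.
From Stdlib Require Import Reals.
From Coquelicot Require Import Complex.
From Stdlib Require Import Lra List FunctionalExtensionality.
Open Scope R_scope.

Definition A (x : pt) := fst x + snd x.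
Definition B (x : pt) := fst x - snd x.

Lemma Rdom_iff x y : Rdom x y <-> (A x + A y) * (B x + B y) <> 0.
Proof. unfold Rdom, mink, padd, A, B; simpl. split; intros H E; apply H; rewrite <- E; ring. Qed.

Lemma Rdom_pq x y : Rdom x y -> A x + A y <> 0 /\ B x + B y <> 0.
Proof. intros H%Rdom_iff. split; intro E; apply H; rewrite E; ring. Qed.

Ltac kf H := intros;
  match goal with H : Rdom ?x ?y |- _ =>
  let H' := fresh in pose proof H as H'; apply Rdom_iff in H';
  destruct (Rdom_pq x y H) as [Hp Hq];
  destruct x as [x0 x1], y as [y0 y1]; unfold Rdom, A, B, u_map, v_map, kfun, mink, padd, psub, pscal in *; simpl in *;
  field; repeat split; auto end.

Lemma Au x y : Rdom x y -> A (u_map x y) = B x * (A x + A y) / (B x + B y).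
Proof. kf H. Qed.
Lemma Bu x y : Rdom x y -> B (u_map x y) = A x * (B x + B y) / (A x + A y).
Proof. kf H. Qed.
Lemma Av x y : Rdom x y -> A (v_map x y) = B y * (A x + A y) / (B x + B y).
Proof. kf H. Qed.
Lemma Bv x y : Rdom x y -> B (v_map x y) = A y * (B x + B y) / (A x + A y).
Proof. kf H. Qed.
Lemma pt_eq x y : A x = A y -> B x = B y -> x = y.
Proof. destruct x, y; unfold A, B; simpl; intros; f_equal; lra. Qed.

Definition pC (c : R) : poly2 := (c, 0%nat, 0%nat) :: nil.
Definition pX0 : poly2 := (1, 1%nat, 0%nat) :: nil.
Definition pX1 : poly2 := (1, 0%nat, 1%nat) :: nil.
Definition pAdd (p q : poly2) : poly2 := p ++ q.
Definition mulm (m1 m2 : R * nat * nat) : R * nat * nat :=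
  match m1, m2 with (c, i, j), (d, k, l) => (c * d, (i + k)%nat, (j + l)%nat) end.
Definition pMul (p q : poly2) : poly2 := flat_map (fun m => map (mulm m) q) p.

Lemma peval_C c x : peval (pC c) x = c.
Proof. unfold pC, peval; simpl; ring. Qed.
Lemma peval_X0 x : peval pX0 x = fst x.
Proof. unfold pX0, peval; simpl; ring. Qed.
Lemma peval_X1 x : peval pX1 x = snd x.
Proof. unfold pX1, peval; simpl; ring. Qed.
Lemma peval_app p q x : peval (p ++ q) x = peval p x + peval q x.
Proof. induction p as [|[[c i] j] p IH]; simpl; [ring|]. unfold peval in *; simpl; rewrite IH; ring. Qed.
Lemma peval_add p q x : peval (pAdd p q) x = peval p x + peval q x.
Proof. apply peval_app. Qed.
Lemma peval_mulm c i j q x : peval (map (mulm (c, i, j)) q) x = c * fst x ^ i * snd x ^ j * peval q x.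
Proof. induction q as [|[[d k] l] q IH]; unfold peval in *; simpl; [ring|].
  rewrite IH, !pow_add; ring. Qed.
Lemma peval_mul p q x : peval (pMul p q) x = peval p x * peval q x.
Proof. induction p as [|[[c i] j] p IH]; unfold pMul in *; simpl; [unfold peval; simpl; ring|].
  rewrite peval_app, peval_mulm, IH. unfold peval; simpl; ring. Qed.

Global Opaque pC pX0 pX1 pAdd pMul.
Ltac pev := repeat progress rewrite ?peval_add, ?peval_mul, ?peval_C, ?peval_X0, ?peval_X1.

Definition PA := pAdd pX0 pX1.
Definition PB := pAdd pX0 (pMul (pC (-1)) pX1).
Lemma peval_PA x : peval PA x = fst x + snd x. Proof. unfold PA; pev; ring. Qed.
Lemma peval_PB x : peval PB x = fst x - snd x. Proof. unfold PB; pev; ring. Qed.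
Global Opaque PA PB.
Ltac pev2 := repeat progress rewrite ?peval_add, ?peval_mul, ?peval_C, ?peval_PA, ?peval_PB.

Section S.
Variables a2 b2 : R.
Definition Pp := pAdd PA (pC a2).
Definition Pq := pAdd PB (pC b2).
Definition Fm : ratmap := RatMap
  (pAdd (pMul PB (pMul Pp Pp)) (pMul PA (pMul Pq Pq))) (pMul (pC 2) (pMul Pp Pq))
  (pAdd (pMul PB (pMul Pp Pp)) (pMul (pC (-1)) (pMul PA (pMul Pq Pq)))) (pMul (pC 2) (pMul Pp Pq)).
Definition Ps := pAdd PA (pC (- a2)).
Definition Pt := pAdd PB (pC (- b2)).
Definition Gm : ratmap := RatMap
  (pAdd (pMul PB (pMul Ps Ps)) (pMul PA (pMul Pt Pt))) (pMul (pC 2) (pMul Ps Pt))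
  (pAdd (pMul PB (pMul Ps Ps)) (pMul (pC (-1)) (pMul PA (pMul Pt Pt)))) (pMul (pC 2) (pMul Ps Pt)).
Definition h1 := pMul Pp (pMul Pq (pAdd (pMul PA PB) (pC (- (a2 * b2))))).
Definition h2 := pMul Ps (pMul Pt (pAdd (pMul PA PB) (pC (- (a2 * b2))))).
End S.

Lemma Fm_eval a2 b2 x : reval (Fm a2 b2) x =
  (let a := fst x + snd x in let b := fst x - snd x in
   ((b * (a+a2)^2 + a * (b+b2)^2) / (2 * ((a+a2)*(b+b2))),
    (b * (a+a2)^2 - a * (b+b2)^2) / (2 * ((a+a2)*(b+b2))))).
Proof. unfold reval, Fm, Pp, Pq; cbn [num0 den0 num1 den1]. pev2. cbv zeta. f_equal; f_equal; ring. Qed.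
Lemma Gm_eval a2 b2 x : reval (Gm a2 b2) x =
  (let a := fst x + snd x in let b := fst x - snd x in
   ((b * (a-a2)^2 + a * (b-b2)^2) / (2 * ((a-a2)*(b-b2))),
    (b * (a-a2)^2 - a * (b-b2)^2) / (2 * ((a-a2)*(b-b2))))).
Proof. unfold reval, Gm, Ps, Pt; cbn [num0 den0 num1 den1]. pev2. cbv zeta. f_equal; f_equal; ring. Qed.
Lemma Fm_def a2 b2 x : rdefined (Fm a2 b2) x <->
  (let a := fst x + snd x in let b := fst x - snd x in 2 * ((a+a2)*(b+b2)) <> 0).
Proof. unfold rdefined, Fm, Pp, Pq; cbn [num0 den0 num1 den1]. pev2. cbv zeta. split; [intros [H _]; exact H| intro H; split; exact H]. Qed.
Lemma Gm_def a2 b2 x : rdefined (Gm a2 b2) x <->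
  (let a := fst x + snd x in let b := fst x - snd x in 2 * ((a-a2)*(b-b2)) <> 0).
Proof. unfold rdefined, Gm, Ps, Pt; cbn [num0 den0 num1 den1]. pev2. cbv zeta.
  replace (fst x + snd x + - a2) with (fst x + snd x - a2) by ring.
  replace (fst x - snd x + - b2) with (fst x - snd x - b2) by ring.
  split; [intros [H _]; exact H| intro H; split; exact H]. Qed.
Lemma h1_eval a2 b2 x : peval (h1 a2 b2) x =
  (fst x + snd x + a2) * ((fst x - snd x + b2) * ((fst x + snd x) * (fst x - snd x) - a2 * b2)).
Proof. unfold h1, Pp, Pq. pev2. ring. Qed.
Lemma h2_eval a2 b2 x : peval (h2 a2 b2) x =
  (fst x + snd x - a2) * ((fst x - snd x - b2) * ((fst x + snd x) * (fst x - snd x) - a2 * b2)).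
Proof. unfold h2, Ps, Pt. pev2. ring. Qed.

Lemma nzdiv a b : a <> 0 -> b <> 0 -> a / b <> 0.
Proof. intros; unfold Rdiv; apply Rmult_integral_contrapositive; split; [auto| apply Rinv_neq_0_compat; auto]. Qed.

Lemma prod3 a b c : a * (b * c) <> 0 -> a <> 0 /\ b <> 0 /\ c <> 0.
Proof. intro H; repeat split; intro E; apply H; rewrite E; ring. Qed.

Lemma big_nz a2 b2 : exists t, (t + a2) * ((t + b2) * (t * t - a2 * b2)) <> 0 /\
   (t - a2) * ((t - b2) * (t * t - a2 * b2)) <> 0.
Proof.
  exists (Rabs a2 + Rabs b2 + 1).
  pose proof (Rabs_pos a2); pose proof (Rabs_pos b2).
  pose proof (Rle_abs a2); pose proof (Rle_abs b2).
  pose proof (Rle_abs (-a2)); pose proof (Rle_abs (-b2)). rewrite Rabs_Ropp in *.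
  assert (a2 * b2 <= Rabs a2 * Rabs b2) by (rewrite <- Rabs_mult; apply Rle_abs).
  split; apply Rgt_not_eq; repeat apply Rmult_gt_0_compat; nra.
Qed.

Lemma bir_u y : birational (fun x => u_map x y).
Proof.
  set (a2 := A y). set (b2 := B y).
  exists (Fm a2 b2), (Gm a2 b2), (h1 a2 b2), (h2 a2 b2).
  destruct (big_nz a2 b2) as [t [Ht1 Ht2]].
  split; [exists (t, 0); rewrite h1_eval; simpl; replace (t+0) with t by ring; replace (t-0) with t by ring; exact Ht1|].
  split; [exists (t, 0); rewrite h2_eval; simpl; replace (t+0) with t by ring; replace (t-0) with t by ring; exact Ht2|].
  split.
  - intros [x0 x1] H. rewrite h1_eval in H. simpl in H.
    apply prod3 in H. destruct H as [Hp [Hq HN]].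
    assert (Hd : Rdom (x0, x1) y).
    { apply Rdom_iff. unfold A at 1, B at 1; simpl. fold a2 b2. apply Rmult_integral_contrapositive; auto. }
    assert (HF : reval (Fm a2 b2) (x0, x1) = u_map (x0, x1) y).
    { apply pt_eq; rewrite ?Au, ?Bu by exact Hd; rewrite Fm_eval; cbv zeta; fold a2 b2; unfold A, B; simpl;
      field; auto. }
    rewrite Fm_eval; cbv zeta; cbn [fst snd].
    set (a := x0 + x1) in *. set (b := x0 - x1) in *.
    assert (Ha : (b * (a + a2) ^ 2 + a * (b + b2) ^ 2) / (2 * ((a + a2) * (b + b2))) +
      (b * (a + a2) ^ 2 - a * (b + b2) ^ 2) / (2 * ((a + a2) * (b + b2))) - a2 = (a*b - a2*b2) / (b + b2))
      by (field; auto).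
    assert (Hb : (b * (a + a2) ^ 2 + a * (b + b2) ^ 2) / (2 * ((a + a2) * (b + b2))) -
      (b * (a + a2) ^ 2 - a * (b + b2) ^ 2) / (2 * ((a + a2) * (b + b2))) - b2 = (a*b - a2*b2) / (a + a2))
      by (field; auto).
    assert (Ha' : (b * (a + a2) ^ 2 + a * (b + b2) ^ 2) / (2 * ((a + a2) * (b + b2))) +
      (b * (a + a2) ^ 2 - a * (b + b2) ^ 2) / (2 * ((a + a2) * (b + b2))) = b * (a + a2) / (b + b2))
      by (field; auto).
    assert (Hb' : (b * (a + a2) ^ 2 + a * (b + b2) ^ 2) / (2 * ((a + a2) * (b + b2))) -
      (b * (a + a2) ^ 2 - a * (b + b2) ^ 2) / (2 * ((a + a2) * (b + b2))) = a * (b + b2) / (a + a2))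
      by (field; auto).
    split; [|split; [|split]].
    + apply Fm_def; cbv zeta; simpl; fold a b. apply Rmult_integral_contrapositive; split; [lra|]. apply Rmult_integral_contrapositive; auto.
    + rewrite <- HF, Fm_eval; reflexivity.
    + apply Gm_def; cbv zeta; cbn [fst snd]. rewrite Ha, Hb.
      apply Rmult_integral_contrapositive; split; [lra|]. apply Rmult_integral_contrapositive; split; apply nzdiv; auto.
    + rewrite Gm_eval; cbv zeta; cbn [fst snd]. rewrite Ha, Hb, Ha', Hb'.
      f_equal; unfold a, b in *; field; auto.
  - intros [w0 w1] H. rewrite h2_eval in H. simpl in H.
    apply prod3 in H. destruct H as [Hs [Ht HM]].
    rewrite Gm_eval; cbv zeta; cbn [fst snd].
    set (a := w0 + w1) in *. set (b := w0 - w1) in *.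
    assert (Ha : (b * (a - a2) ^ 2 + a * (b - b2) ^ 2) / (2 * ((a - a2) * (b - b2))) +
      (b * (a - a2) ^ 2 - a * (b - b2) ^ 2) / (2 * ((a - a2) * (b - b2))) + a2 = (a*b - a2*b2) / (b - b2))
      by (field; auto).
    assert (Hb : (b * (a - a2) ^ 2 + a * (b - b2) ^ 2) / (2 * ((a - a2) * (b - b2))) -
      (b * (a - a2) ^ 2 - a * (b - b2) ^ 2) / (2 * ((a - a2) * (b - b2))) + b2 = (a*b - a2*b2) / (a - a2))
      by (field; auto).
    assert (Ha' : (b * (a - a2) ^ 2 + a * (b - b2) ^ 2) / (2 * ((a - a2) * (b - b2))) +
      (b * (a - a2) ^ 2 - a * (b - b2) ^ 2) / (2 * ((a - a2) * (b - b2))) = b * (a - a2) / (b - b2))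
      by (field; auto).
    assert (Hb' : (b * (a - a2) ^ 2 + a * (b - b2) ^ 2) / (2 * ((a - a2) * (b - b2))) -
      (b * (a - a2) ^ 2 - a * (b - b2) ^ 2) / (2 * ((a - a2) * (b - b2))) = a * (b - b2) / (a - a2))
      by (field; auto).
    split; [|split].
    + apply Gm_def; cbv zeta; simpl; fold a b. apply Rmult_integral_contrapositive; split; [lra|]. apply Rmult_integral_contrapositive; auto.
    + apply Fm_def; cbv zeta; cbn [fst snd]. rewrite Ha, Hb.
      apply Rmult_integral_contrapositive; split; [lra|]. apply Rmult_integral_contrapositive; split; apply nzdiv; auto.
    + rewrite Fm_eval; cbv zeta; cbn [fst snd]. rewrite Ha, Hb, Ha', Hb'.
      f_equal; unfold a, b in *; field; auto.
Qed.

Ltac nz H c d := let E := fresh in assert (c <> 0) by (match type of H with ?e <> 0 =>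
  intro E; apply H; replace e with (c / d) by (field; repeat split; assumption); rewrite E; unfold Rdiv; ring end).

Lemma YB : YB_generic.
Proof.
  intros [[x y] z] a b H1 H2.
  unfold R12, R13, R23, obind, Ropt, Rmap in *.
  repeat match goal with H : context[Req_EM_T ?a ?b] |- _ => destruct (Req_EM_T a b) end;
  try discriminate.
  injection H1 as <-. injection H2 as <-.
  repeat match goal with H : mink (padd ?p ?q) _ <> 0 |- _ => change (Rdom p q) in H end.
  repeat match goal with H : Rdom ?p ?q |- _ => 
    lazymatch goal with _ : A p + A q <> 0 /\ _ |- _ => fail | _ => pose proof (Rdom_pq p q H) end end.
  f_equal; [f_equal|]; apply pt_eq.
  all: repeat match goal with H : Rdom ?p ?q |- _ => 
    progress rewrite ?(Au p q H), ?(Bu p q H), ?(Av p q H), ?(Bv p q H) in * end.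
  all: repeat match goal with H : Rdom _ _ |- _ => clear H end.
  all: generalize dependent (A x); generalize dependent (B x);
  generalize dependent (A y); generalize dependent (B y);
  generalize dependent (A z); generalize dependent (B z); intros.
  all: repeat match goal with H : _ /\ _ |- _ => destruct H end.
  all: nz H8 (r3 * (r2 + r0) + r0 * (r1 + r)) (r2+r0).
  all: nz H0 (r4 * (r1 + r) + r * (r2 + r0)) (r1+r).
  all: nz H6 (r4 * (r3 + r1) + r * (r4 + r2)) (r4+r2).
  all: nz H3 (r3 * (r4 + r2) + r0 * (r3 + r1)) (r3+r1).
  all: nz H9 (r4 * (r3 * (r2 + r0) + r0 * (r1 + r)) * (r1 + r) + r2 * (r1 + r) * (r4 * (r1 + r) + r * (r2 + r0))) ((r2+r0)*(r4 * (r1 + r) + r * (r2 + r0))).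
  all: nz H (r3 * (r4 * (r1 + r) + r * (r2 + r0)) * (r2 + r0) + r1 * (r2 + r0) * (r3 * (r2 + r0) + r0 * (r1 + r))) ((r1+r)*(r3 * (r2 + r0) + r0 * (r1 + r))).
  all: nz H2 (r1 * (r4 + r2) * (r4 * (r3 + r1) + r * (r4 + r2)) + r * (r3 * (r4 + r2) + r0 * (r3 + r1)) * (r4 + r2)) ((r3+r1)*(r4 * (r3 + r1) + r * (r4 + r2))).
  all: nz H7 (r2 * (r3 + r1) * (r3 * (r4 + r2) + r0 * (r3 + r1)) + r0 * (r4 * (r3 + r1) + r * (r4 + r2)) * (r3 + r1)) ((r4+r2)*(r3 * (r4 + r2) + r0 * (r3 + r1))).
  all: field; repeat split; auto.

Qed.

Lemma v_u x y : v_map x y = u_map y x.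
Proof.
  destruct x as [x0 x1], y as [y0 y1].
  unfold v_map, u_map, kfun, padd, psub, pscal, mink; simpl.
  replace (y0 + x0) with (x0 + y0) by ring. replace (y1 + x1) with (x1 + y1) by ring.
  unfold Rdiv. f_equal; ring.
Qed.

Lemma lax x y u v : Rdom x y -> Rmap x y = (u, v) ->
     forall zeta : C, mmul (Lax u zeta) (Lax v zeta) = mmul (Lax y zeta) (Lax x zeta).
Proof.
  intros H E zeta. injection E as <- <-.
  pose proof (Rdom_pq x y H) as [Hp Hq].
  destruct x as [x0 x1], y as [y0 y1], zeta as [z1 z2].
  unfold Rdom, A, B, u_map, v_map, kfun, mink, padd, psub, pscal, Lax, mmul, Cplus, Cmult, RtoC in *; simpl in *.
  f_equal; f_equal; field; auto.
Qed.

Theorem proposition3p1 :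
  YB_generic /\
  quadrirational u_map v_map /\
  (forall (x y u v : pt), Rdom x y -> Rmap x y = (u, v) ->
     forall zeta : C, mmul (Lax u zeta) (Lax v zeta) = mmul (Lax y zeta) (Lax x zeta)).
Proof.
  split; [exact YB|]. split; [|exact lax].
  split; [exact bir_u|].
  intro x. assert (E : (fun y => v_map x y) = (fun y => u_map y x))
    by (apply functional_extensionality; intro; apply v_u).
  rewrite E. apply bir_u.
Qed.
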